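(* Let $\Lambda$ be diagonal with entries in $[0,1]$, $W$ row-stochastic, $\beta\in[0,1]^n$, and set $W^{(1)}=[\mathbf 1-\beta]W$, $W^{(2)}=[\beta]W$. Then, with $\bar A_d:=\begin{pmatrix}0 & I\\ \Lambda W^{(2)} & \Lambda W^{(1)}\end{pmatrix}$, one has $\rho(\bar A_d)\ge\rho(\Lambda W)$.
   Context: $[v]$ denotes the diagonal matrix with diagonal $v$; $\mathbf 1$ is the all-ones vector; $\rho$ is spectral radius. *)

(* Defs.v *)
From HB Require Import structures.
From mathcomp Require Import all_boot all_order all_algebra.
From mathcomp Require Import complex.
Set Implicit Arguments. Unset Strict Implicit. Unset Printing Implicit Defensive.
Import Order.TTheory GRing.Theory Num.Theory.
Local Open Scope ring_scope.

(* Real matrices over an arbitrary real closed field R (e.g. the reals);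
   eigenvalues are taken in the algebraic closure R[i] = complex R. *)

Definition complexify (R : rcfType) m n (A : 'M[R]_(m, n)) : 'M[R[i]]_(m, n) :=
  map_mx (fun x : R => (x%:C)%C) A.

Definition eigenvalues (R : rcfType) n (A : 'M[R]_n) : seq R[i] :=
  sval (closed_field_poly_normal (char_poly (complexify A))).

(* spectral radius: max modulus of the (complex) eigenvalues, 0 if n = 0.
   The value is a nonnegative real, stored in R[i]. *)
Definition spectral_radius (R : rcfType) n (A : 'M[R]_n) : R[i] :=
  \big[Num.max/0]_(z <- eigenvalues A) `|z|.

Definition diagv (R : rcfType) n (v : 'I_n -> R) : 'M[R]_n :=
  diag_mx (\row_i v i).

Definition row_stochastic (R : rcfType) n (W : 'M[R]_n) : Prop :=
  (forall i j, 0 <= W i j) /\ (forall i, \sum_j W i j = 1).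

(* Main.v *)
Require Import Defs.
From HB Require Import structures.
From mathcomp Require Import all_boot all_order all_algebra.
From mathcomp Require Import complex polyrcf.
From mathcomp Require Import ring lra.
Import Order.TTheory GRing.Theory Num.Theory.
Set Implicit Arguments. Unset Strict Implicit. Unset Printing Implicit Defensive.
Local Open Scope ring_scope.

Section BM.
Variable C : numDomainType.
Implicit Types l : seq C.

Lemma bm_real l : \big[Num.max/0]_(z <- l) `|z| \is Num.real.
Proof. by apply: bigmax_real => //; rewrite ?real0 // => i _; apply: normr_real. Qed.

Lemma bm_le l c : 0 <= c -> (forall z, z \in l -> `|z| <= c) ->
  \big[Num.max/0]_(z <- l) `|z| <= c.
Proof.
elim: l => [|a l IH] c0 h; first by rewrite big_nil.
rewrite big_cons comparable_ge_max ?h ?mem_head ?IH // => [z zl|].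
  by apply: h; rewrite in_cons zl orbT.
by apply: real_comparable; [apply: normr_real | apply: bm_real].
Qed.

Lemma bm_ge l z : z \in l -> `|z| <= \big[Num.max/0]_(w <- l) `|w|.
Proof.
elim: l => [|a l IH] //; rewrite in_cons big_cons => /orP[/eqP ->|zl].
  by rewrite comparable_le_max ?lexx // real_comparable ?normr_real ?bm_real.
by rewrite comparable_le_max ?IH ?orbT // real_comparable ?normr_real ?bm_real.
Qed.

Lemma bm_ge0 l : 0 <= \big[Num.max/0]_(z <- l) `|z|.
Proof.
elim: l => [|a l IH]; first by rewrite big_nil.
by rewrite big_cons comparable_le_max ?IH ?orbT // real_comparable ?normr_real ?bm_real.
Qed.
End BM.

Lemma horner_charG (F : comNzRingType) n (A : 'M[F]_n) s :
  (char_poly A).[s] = \det (s%:M - A).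
Proof.
symmetry; rewrite horner_sum; apply: eq_bigr => σ _.
rewrite hornerM horner_exp !hornerE; congr (_ * _).
rewrite (big_morph _ (fun p q => hornerM p q s) (hornerC 1 s)).
by apply: eq_bigr => i _; rewrite !mxE !(hornerE, hornerMn).
Qed.

Section Main.
Variable R : rcfType.

Definition nnmx m n (M : 'M[R]_(m, n)) := forall i j, 0 <= M i j.

Lemma nnmx_mul m n p (A : 'M[R]_(m, n)) (B : 'M[R]_(n, p)) :
  nnmx A -> nnmx B -> nnmx (A *m B).
Proof.
move=> hA hB i j; rewrite mxE; apply: sumr_ge0 => k _; exact: mulr_ge0.
Qed.

Lemma horner_char n (A : 'M[R]_n) s : (char_poly A).[s] = \det (s%:M - A).
Proof.
symmetry; rewrite horner_sum; apply: eq_bigr => σ _.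
rewrite hornerM horner_exp !hornerE; congr (_ * _).
rewrite (big_morph _ (fun p q => hornerM p q s) (hornerC 1 s)).
by apply: eq_bigr => i _; rewrite !mxE !(hornerE, hornerMn).
Qed.

Lemma large_root (p : {poly R}) s : p \is monic -> p.[s] <= 0 ->
  exists2 x, s <= x & root p x.
Proof.
move=> pm ps.
have lc : 0 < lead_coef p by rewrite (monicP pm) ltr01.
have [N hN] := poly_pinfty_gt_lc lc.
have hb : s <= Num.max s N by rewrite le_max lexx.
have pb : 0 < p.[Num.max s N] by apply: (lt_le_trans lc); apply: hN; rewrite le_max lexx orbT.
have h0 : p.[s] <= 0 <= p.[Num.max s N] by rewrite ps ltW.
have [x hx rx] := poly_ivt hb h0.
move: hx => /andP[hx _]; by exists x.
Qed.

Lemma schur n (al : 'M[R]_1) (be : 'M[R]_(1, n)) (ga : 'M[R]_(n, 1)) (M : 'M[R]_n) :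
  M \in unitmx ->
  \det (block_mx al be ga M) = \det M * (al - be *m invmx M *m ga) 0 0.
Proof.
move=> Mu.
have -> : block_mx al be ga M = block_mx 1%:M (be *m invmx M) 0 1%:M *m
   block_mx (al - be *m invmx M *m ga) 0 ga M.
  rewrite mulmx_block ?mul1mx ?mul0mx ?mulmx0 ?addr0 ?add0r mulmxKV //.
  by rewrite subrK.
by rewrite det_mulmx det_ublock det_lblock !det1 det_mx11 !mul1r mulrC.
Qed.

Lemma poly_right (f : {poly R}) x : (forall y, x < y -> f.[y] <= 0) -> f.[x] <= 0.
Proof.
move=> hf; rewrite leNgt; apply/negP => fx.
have [d d0 hd] := poly_cont x f fx.
have hy : `|(x + d / 2) - x| < d.
  rewrite (addrC x) addrK ger0_norm ?divr_ge0 ?ltW //.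
  by rewrite ltr_pdivrMr ?ltr0n // ltr_pMr ?ltr1n.
have := hd _ hy; have : x < x + d / 2 by rewrite ltrDl divr_gt0.
move=> /hf h1; rewrite ltr_norml => /andP[h2 _].
move: h1 h2; set a := f.[_]; set b := f.[x]; lra.
Qed.

Lemma seq_max (l : seq R) x0 : exists m, [/\ m = x0 \/ m \in l, x0 <= m &
   forall x, x \in l -> x <= m].
Proof.
elim: l => [|a l [m [hm1 hm2 hm3]]]; first by exists x0; split => //; left.
exists (Num.max a m); split.
- rewrite /Num.max; case: ifP => _; last by right; rewrite mem_head.
  by case: hm1 => [->|h]; [left|right; rewrite in_cons h orbT].
- by rewrite le_max hm2 orbT.
- by move=> x; rewrite in_cons => /orP[/eqP ->|/hm3 h]; rewrite le_max ?lexx ?h ?orbT.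
Qed.

Lemma max_root (p : {poly R}) t x0 : p != 0 -> root p x0 -> t <= x0 ->
  exists s1, [/\ t <= s1, root p s1 & forall x, root p x -> t <= x -> x <= s1].
Proof.
move=> p0 r0 t0.
have [m [hm1 hm2 hm3]] := seq_max [seq x <- rootsR p | t <= x] x0.
have inR x : root p x -> x \in rootsR p.
  by move=> rx; rewrite -(roots_on_rootsR p0 x) rx in_itv.
exists m; split.
- exact: le_trans hm2.
- case: hm1 => [->//|]; rewrite mem_filter => /andP[_ h].
  by move: (roots_on_rootsR p0 m); rewrite h => /andP[].
- by move=> x rx tx; apply: hm3; rewrite mem_filter tx inR.
Qed.

Definition good n (A : 'M[R]_n) t := forall s, t <= s -> 0 < \det (s%:M - A).
Definition mono n (A : 'M[R]_n) t :=
  forall y : 'cV[R]_n, nnmx ((t%:M - A) *m y) -> nnmx y.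

Lemma nnmx_add m n (A B : 'M[R]_(m, n)) : nnmx A -> nnmx B -> nnmx (A + B).
Proof. by move=> hA hB i j; rewrite mxE addr_ge0. Qed.

Lemma nnmx_col m1 m2 n (A : 'M[R]_(m1, n)) (B : 'M[R]_(m2, n)) :
  nnmx A -> nnmx B -> nnmx (col_mx A B).
Proof.
move=> hA hB i j; rewrite -(splitK i); case: (split i) => k /=.
  by rewrite col_mxEu.
by rewrite col_mxEd.
Qed.

Lemma blk_sub n (a : 'M[R]_1) (b : 'M[R]_(1, n)) (c : 'M[R]_(n, 1)) (D : 'M[R]_n) s :
  s%:M - block_mx a b c D = block_mx (s%:M - a) (- b) (- c) (s%:M - D).
Proof. by rewrite (scalar_mx_block 1 n s) opp_block_mx add_block_mx !sub0r. Qed.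

Lemma mono_inv n (D : 'M[R]_n) s : mono D s -> (s%:M - D) \in unitmx ->
  nnmx (invmx (s%:M - D)).
Proof.
move=> hm hu i j.
have h1 : nnmx (col j (1%:M : 'M[R]_n)) by move=> k l; rewrite !mxE ler0n.
have h2 : nnmx ((s%:M - D) *m col j (invmx (s%:M - D))).
  by rewrite !colE mulmxA mulmxV // mul1mx; move: h1; rewrite colE mul1mx.
by have := hm _ h2 i 0; rewrite mxE.
Qed.

Lemma step n (IH : forall (D : 'M[R]_n) t, nnmx D -> good D t -> mono D t)
  (a : 'M[R]_1) (b : 'M[R]_(1, n)) (c : 'M[R]_(n, 1)) (D : 'M[R]_n) t :
  nnmx (block_mx a b c D) -> good (block_mx a b c D) t -> mono (block_mx a b c D) t.
Proof.
move=> hnn hg.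
have ha : nnmx a by move=> i j; have := hnn (lshift n i) (lshift n j); rewrite block_mxEul.
have hb : nnmx b by move=> i j; have := hnn (lshift n i) (rshift 1 j); rewrite block_mxEur.
have hc : nnmx c by move=> i j; have := hnn (rshift 1 i) (lshift n j); rewrite block_mxEdl.
have hD : nnmx D by move=> i j; have := hnn (rshift 1 i) (rshift 1 j); rewrite block_mxEdr.
have eS s (hu : (s%:M - D) \in unitmx) : \det (s%:M - block_mx a b c D) =
    \det (s%:M - D) * (s - a 0 0 - (b *m invmx (s%:M - D) *m c) 0 0).
  rewrite blk_sub schur // !mulmxN !mulNmx !opprK; congr (_ * _).
  by rewrite !mxE eqxx mulr1n.
have dm := char_poly_monic D.
have hgD : good D t.
  move=> s0 ts0; rewrite ltNge; apply/negP => hs0.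
  rewrite -horner_char in hs0.
  have [x0 hx0 rx0] := large_root dm hs0.
  have [s1 [ts1 rs1 hmax]] := max_root (monic_neq0 dm) rx0 (le_trans ts0 hx0).
  have dpos s : s1 < s -> 0 < (char_poly D).[s].
    move=> hs; rewrite ltNge; apply/negP => hds.
    have [x1 hx1 rx1] := large_root dm hds.
    have := hmax x1 rx1 (le_trans ts1 (le_trans (ltW hs) hx1)).
    by rewrite leNgt (lt_le_trans hs hx1).
  pose f := char_poly (block_mx a b c D) - char_poly D * ('X - (a 0 0)%:P).
  have hf : f.[s1] <= 0.
    apply: poly_right => s hs.
    have gD : good D s.
      by move=> s' ss'; rewrite -horner_char; apply: dpos; exact: lt_le_trans hs ss'.
    have mD := IH _ _ hD gD.
    have dp := dpos _ hs.
    have hu : (s%:M - D) \in unitmx.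
      by rewrite unitmxE unitfE -horner_char gt_eqF.
    have hinv := mono_inv mD hu.
    have hP : 0 <= (b *m invmx (s%:M - D) *m c) 0 0.
      by apply: nnmx_mul => //; apply: nnmx_mul.
    rewrite /f !hornerE horner_char eS // -horner_char.
    move: hP dp; set P := (_ *m _) 0 0; set d := (char_poly D).[s].
    move=> hP dp; nra.
  have := hg _ ts1; rewrite -horner_char.
  move: hf; rewrite /f !hornerE (rootP rs1) mul0r subr0 => h1 h2.
  by move: (lt_le_trans h2 h1); rewrite ltxx.
have gtD := hgD t (lexx t).
have hu : (t%:M - D) \in unitmx by rewrite unitmxE unitfE gt_eqF.
have hinv := mono_inv (IH _ _ hD hgD) hu.
move=> y hy; rewrite -[y]vsubmxK.
move: hy; rewrite -[y]vsubmxK blk_sub mul_block_col.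
set y0 := usubmx y; set y1 := dsubmx y => hy; clearbody y0 y1.
have htop : nnmx ((t%:M - a) *m y0 + - b *m y1).
  by move=> i j; have := hy (lshift n i) j; rewrite col_mxEu.
have hbot : nnmx (- c *m y0 + (t%:M - D) *m y1).
  by move=> i j; have := hy (rshift 1 i) j; rewrite col_mxEd.
move: htop; have -> : y1 = invmx (t%:M - D) *m ((- c *m y0 + (t%:M - D) *m y1) + c *m y0).
  by rewrite mulNmx addrAC addNr add0r mulKmx.
move: hbot; move: (- c *m y0 + (t%:M - D) *m y1) => w hw.
rewrite col_mxKu col_mxKd !mulmxDr !mulmxA !mulNmx.
have hsig := hg t (lexx t); rewrite eS // pmulr_rgt0 // in hsig.
have hP1 : 0 <= (b *m invmx (t%:M - D) *m w) 0 0.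
  by apply: nnmx_mul => //; apply: nnmx_mul.
have hy1 : nnmx y0 -> nnmx (invmx (t%:M - D) *m w + invmx (t%:M - D) *m c *m y0).
  move=> hy0; apply: nnmx_add; first exact: nnmx_mul.
  by apply: nnmx_mul => //; apply: nnmx_mul.
move: hsig hP1 hy1.
move: (b *m invmx (t%:M - D) *m w) (b *m invmx (t%:M - D) *m c) => P1 P2.
move=> hsig hP1 hy1 htop.
have hy0 : nnmx y0.
  move=> i j; rewrite (ord1 i) (ord1 j).
  have := htop 0 0.
  rewrite !mxE !big_ord1 ?mxE.
  have e0 : ord0 = 0 :> 'I_1 by [].
  rewrite !e0 eqxx mulr1n.
  move: hsig hP1.
  set u := y0 0 0; set p := P1 0 0; set q := P2 0 0.
  move=> h1 h2 h3; nra.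
by apply: nnmx_col => //; apply: hy1.
Qed.

Lemma good_mono n (A : 'M[R]_n) t : nnmx A -> good A t -> mono A t.
Proof.
elim: n A t => [|n IH] A t.
  by move=> _ _ y _ [].
move=> hA hg.
have := @step n IH (ulsubmx (A : 'M_(1 + n))) (ursubmx (A : 'M_(1 + n)))
  (dlsubmx (A : 'M_(1 + n))) (drsubmx (A : 'M_(1 + n))) t.
by rewrite submxK; apply.
Qed.

Lemma exists_eig n (A : 'M[R]_n) (x : 'cV[R]_n) r :
  nnmx A -> nnmx x -> x != 0 -> nnmx (A *m x - r *: x) ->
  exists2 s, r <= s & root (char_poly A) s.
Proof.
move=> hA hx x0 hAx.
set p := char_poly A.
have pm : p \is monic := char_poly_monic A.
have inR z : root p z -> z \in rootsR p.
  by move=> rz; rewrite -(roots_on_rootsR (monic_neq0 pm) z) rz in_itv.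
have [/hasP [s hs hrs]|hno] := boolP (has (fun s => r <= s) (rootsR p)).
  exists s => //; move: (roots_on_rootsR (monic_neq0 pm) s); rewrite hs.
  by case/andP.
have hg : good A r.
  move=> s rs; rewrite ltNge; apply/negP => hs.
  rewrite -horner_char -/p in hs.
  have [z hz rz] := large_root pm hs.
  by move/negP: hno; apply; apply/hasP; exists z; [exact: inR | exact: le_trans hz].
have hm := good_mono hA hg.
have hnx : nnmx (- x).
  apply: hm; by rewrite mulmxN mulmxBl mul_scalar_mx opprB.
case/negP: x0; apply/eqP/matrixP => i j; rewrite mxE.
apply/eqP; rewrite eq_le hx andbT.
by have := hnx i j; rewrite mxE oppr_ge0.
Qed.

Lemma eigE n (A : 'M[R]_n) z :
  (z \in eigenvalues A) = root (char_poly (complexify A)) z.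
Proof.
rewrite /eigenvalues; case: closed_field_poly_normal => r /= e.
rewrite [in RHS]e rootZ ?root_prod_XsubC //.
by rewrite (monicP (char_poly_monic _)) oner_neq0.
Qed.

Lemma sr_root n (A : 'M[R]_n) s : 0 <= s -> root (char_poly A) s ->
  s%:C%C <= spectral_radius A.
Proof.
move=> s0 rs.
have hs : s%:C%C \in eigenvalues A.
  rewrite eigE /complexify -(map_char_poly (real_complex R)).
  by rewrite fmorph_root.
apply: le_trans (bm_ge hs); rewrite ger0_norm //.
by rewrite ler0c.
Qed.

Definition nrm (w : R[i]) : R := mathcomp.real_closed.complex.Re `|w|.

Lemma nrmE w : (nrm w)%:C%C = `|w|.
Proof. by rewrite /nrm RRe_real // normr_real. Qed.

Lemma nrm_ge0 w : 0 <= nrm w.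
Proof. by rewrite -ler0c nrmE. Qed.

Lemma eigvec n (B : 'M[R]_n) z : nnmx B -> z \in eigenvalues B ->
  exists u : 'cV[R]_n, [/\ nnmx u, exists i1, 0 < u i1 0 &
     forall i, nrm z * u i 0 <= (B *m u) i 0].
Proof.
move=> hB; rewrite eigE => /rootP; rewrite horner_charG.
rewrite -det_tr => /eqP /det0P [v v0].
rewrite linearB /= tr_scalar_mx mulmxBr mul_mx_scalar => /eqP; rewrite subr_eq0 => /eqP hv.
exists (\col_i nrm (v 0 i)); split.
- by move=> i j; rewrite mxE nrm_ge0.
- case: (boolP [exists i, v 0 i != 0]) => [/existsP [i hi]|].
    exists i; rewrite mxE lt_def nrm_ge0 andbT.
    apply/eqP => h; move: hi; rewrite -normr_eq0 -nrmE h.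
    by rewrite eqxx.
  rewrite negb_exists => /forallP h; case/eqP: v0.
  apply/matrixP => i j; rewrite (ord1 i) mxE.
  by have := h j; rewrite negbK => /eqP.
- move=> i; rewrite -lecR rmorphM /= nrmE mxE nrmE -normrM.
  move/matrixP: hv => /(_ 0 i); rewrite !mxE => ->.
  rewrite ?mxE rmorph_sum /=; apply: le_trans (ler_norm_sum _ _ _) _.
  apply: ler_sum => j _; rewrite !mxE rmorphM /= nrmE normrM mulrC.
  by rewrite ger0_norm // ler0c.
Qed.

End Main.

Lemma nnmx_block (R : rcfType) m1 m2 n1 n2 (a : 'M[R]_(m1, n1)) (b : 'M[R]_(m1, n2))
  (c : 'M[R]_(m2, n1)) (d : 'M[R]_(m2, n2)) :
  nnmx a -> nnmx b -> nnmx c -> nnmx d -> nnmx (block_mx a b c d).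
Proof.
move=> ha hb hc hd i j; rewrite -(splitK i) -(splitK j).
case: (split i) => k; case: (split j) => l /=.
- by rewrite block_mxEul.
- by rewrite block_mxEur.
- by rewrite block_mxEdl.
- by rewrite block_mxEdr.
Qed.

Unset Implicit Arguments.

Theorem corollary2 (R : rcfType) (n : nat) (lam beta : 'I_n -> R) (W : 'M[R]_n) :
  (forall i, 0 <= lam i <= 1) ->
  row_stochastic W ->
  (forall i, 0 <= beta i <= 1) ->
  let Lam := diagv lam in
  let W1 := diagv (fun i => 1 - beta i) *m W in
  let W2 := diagv beta *m W in
  let Abar : 'M[R]_(n + n) := block_mx 0 1%:M (Lam *m W2) (Lam *m W1) in
  spectral_radius (Lam *m W) <= spectral_radius Abar.
Proof.
move=> hlam hW hbeta; case: hW => hWnn hWsum; rewrite /=.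
set Lam := diagv lam; set W1 := diagv (fun i => 1 - beta i) *m W; set W2 := diagv beta *m W.
set Abar := block_mx _ _ _ _.
have nnd (d : 'I_n -> R) : (forall i, 0 <= d i) -> nnmx (diagv d).
  by move=> hd i j; rewrite !mxE mulrn_wge0.
have hLam : nnmx Lam by apply: nnd => i; case/andP: (hlam i).
have hD1 : nnmx (diagv (fun i => 1 - beta i)).
  by apply: nnd => i; case/andP: (hbeta i) => _; rewrite subr_ge0.
have hD2 : nnmx (diagv beta) by apply: nnd => i; case/andP: (hbeta i).
have hB : nnmx (Lam *m W) by apply: nnmx_mul.
have hAbar : nnmx Abar.
  apply: nnmx_block.
  - by move=> i j; rewrite mxE.
  - by move=> i j; rewrite mxE ler0n.
  - by apply: nnmx_mul => //; apply: nnmx_mul.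
  - by apply: nnmx_mul => //; apply: nnmx_mul.
rewrite /spectral_radius; apply: bm_le; first exact: bm_ge0.
move=> z hz.
have [u [hu [i1 hi1] hineq]] := eigvec hB hz.
set r0 := nrm z.
have r0_ge0 : 0 <= r0 := nrm_ge0 z.
have eD (d : 'I_n -> R) (M : 'M[R]_(n, 1)) i : (diagv d *m M) i 0 = d i * M i 0.
  by rewrite /diagv mul_diag_mx !mxE.
have hineq' i : r0 * u i 0 <= lam i * (W *m u) i 0.
  by have := hineq i; rewrite -mulmxA eD.
have Wu_ge0 i : 0 <= (W *m u) i 0 by apply: nnmx_mul.
case: (@arg_maxP _ _ _ i1 xpredT (fun i => u i 0) isT) => im _ him.
have r0_le1 : r0 <= 1.
  have h1 : (W *m u) im 0 <= u im 0.
    rewrite mxE; apply: le_trans (_ : \sum_j W im j * u im 0 <= _).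
      by apply: ler_sum => j _; apply: ler_wpM2l => //; apply: him.
    by rewrite -mulr_suml hWsum mul1r.
  have h2 := hineq' im; have h3 := him i1 isT.
  have := hlam im; case/andP => l0 l1.
  have h4 := Wu_ge0 im.
  move: h1 h2 h3 hi1 l0 l1 h4 r0_ge0.
  set a := u im 0; set b := u i1 0; set c := lam im; set d := (W *m u) im 0.
  move=> h1 h2 h3 h4 l0 l1 h5 h6.
  have ha : 0 < a by apply: lt_le_trans h3.
  have hra : r0 * a <= 1 * a by nra.
  by rewrite ler_pM2r in hra.
pose x : 'cV[R]_(n + n) := col_mx u (r0 *: u).
have hx : nnmx x.
  apply: nnmx_col => // i j; rewrite mxE; exact: mulr_ge0.
have x0 : x != 0.
  apply/negP => /eqP /matrixP /(_ (lshift n i1) 0); rewrite col_mxEu mxE.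
  by move=> e; move: hi1; rewrite e ltxx.
have hAx : nnmx (Abar *m x - r0 *: x).
  rewrite /Abar /x mul_block_col scale_col_mx opp_col_mx add_col_mx.
  apply: nnmx_col.
    by rewrite mul0mx mul1mx add0r subrr => i j; rewrite mxE.
  move=> i j; rewrite (ord1 j).
  have e1 : (Lam *m W2 *m u) i 0 = lam i * (beta i * (W *m u) i 0).
    by rewrite /W2 -!mulmxA !eD.
  have e2 : (Lam *m W1 *m (r0 *: u)) i 0 = r0 * (lam i * ((1 - beta i) * (W *m u) i 0)).
    by rewrite -scalemxAr [LHS]mxE /W1 -!mulmxA !eD.
  have e3 : (r0 *: (r0 *: u)) i 0 = r0 * (r0 * u i 0) by rewrite !mxE.
  rewrite [X in 0 <= X]mxE [X in 0 <= X + _]mxE [X in 0 <= _ + X]mxE e1 e2 e3.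
  have := hineq' i; have := hbeta i; case/andP => b0 b1.
  have := hlam i; case/andP => l0 l1.
  have := Wu_ge0 i; have := hu i 0.
  set a := u i 0; set c := lam i; set d := (W *m u) i 0; set e := beta i.
  move=> h1 h2 h3.
  have k1 : 0 <= (c * d - r0 * a) * (e + r0 * (1 - e)).
    apply: mulr_ge0; first by rewrite subr_ge0.
    by apply: addr_ge0 => //; apply: mulr_ge0 => //; rewrite subr_ge0.
  have k2 : 0 <= r0 * a * e * (1 - r0).
    by apply: mulr_ge0; [apply: mulr_ge0; [apply: mulr_ge0|]|rewrite subr_ge0].
  nra.
have [s hs rs] := exists_eig hAbar hx x0 hAx.
apply: le_trans (sr_root (le_trans r0_ge0 hs) rs).
by rewrite -nrmE lecR.
Qed.
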